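(* Let $A$ be an AUF algebra, let $M\in\mathrm{Coh}_{\mathrm L}(A)$, let $B=\mathrm{End}_{A,-}(M)^{\mathrm{op}}$ (a finite-dimensional unital algebra acting on $M$ on the right), and let $p\in B$ be an idempotent. Consider the statements: (1) As coherent left $A$-modules, $Mp$ generates $M$, i.e. $M$ is a quotient of $(Mp)^{\oplus n}$ for some $n\ge1$; (2) $p$ is a generating idempotent of $B$. Then (2) implies (1). If $M$ is projective as a left $A$-module, then (1) and (2) are equivalent.
   Context: All algebras are associative $\mathbb C$-algebras, not necessarily unital. An idempotent is $e$ with $e^2=e$. An algebra $A$ is AUF if there is a family $(e_i)_{i\in\mathfrak I}$ of mutually orthogonal idempotents with $\dim e_iAe_j<\infty$ and $A=\sum_{i,j}e_iAe_j$. A left $A$-module $M$ is quasicoherent if $\xi\in A\xi$ for all $\xi\in M$, coherent if moreover finitely generated; $\mathrm{Coh}_{\mathrm L}(A)$ is the category of coherent left $A$-modules. $B=\mathrm{End}_{A,-}(M)^{\mathrm{op}}$ is the algebra of left $A$-module endomorphisms of $M$ with opposite multiplication, acting on the right by $\xi\cdot T=T(\xi)$; $Mp=\{\xi p:\xi\in M\}$ is a left $A$-submodule. Irreducible means nonzero with no nonzero proper submodules. For an AUF algebra $C$ (e.g. a finite-dimensional unital algebra), an idempotent $q\in C$ is generating if every irreducible quasicoherent left $C$-module is a quotient of $Cq$. *)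

(* Defs.v *)
From HB Require Import structures.
From mathcomp Require Import all_boot all_algebra.
From mathcomp Require Import complex Rstruct.
Set Implicit Arguments. Unset Strict Implicit. Unset Printing Implicit Defensive.
Import GRing.Theory.
Local Open Scope ring_scope.

Definition CC : numClosedFieldType := (Rdefinitions.R)[i].

Record algebra := Algebra {
  acar :> lmodType CC;
  amul : acar -> acar -> acar;
  amulDl : forall a b c, amul (a + b) c = amul a c + amul b c;
  amulDr : forall a b c, amul a (b + c) = amul a b + amul a c;
  amulZl : forall (k : CC) a b, amul (k *: a) b = k *: amul a b;
  amulZr : forall (k : CC) a b, amul a (k *: b) = k *: amul a b;
  amulA : forall a b c, amul a (amul b c) = amul (amul a b) c
}.

Definition idempotent (A : algebra) (e : A) := amul e e = e.

Definition fin_dim_set (V : lmodType CC) (S : V -> Prop) :=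
  exists s : seq V, forall v, S v ->
    exists c : 'I_(size s) -> CC, v = \sum_(k < size s) c k *: s`_k.

Definition AUF (A : algebra) :=
  exists (I : Type) (e : I -> A),
    (forall i, idempotent (e i)) /\
    (forall i j, i <> j -> amul (e i) (e j) = 0) /\
    (forall i j, fin_dim_set (fun x : A => exists a, x = amul (amul (e i) a) (e j))) /\
    (forall a : A, exists s : seq (I * I * A),
        a = \sum_(t <- s) amul (amul (e t.1.1) t.2) (e t.1.2)).

Record lmod (A : algebra) := LMod {
  mcar :> lmodType CC;
  act : A -> mcar -> mcar;
  actDl : forall a b v, act (a + b) v = act a v + act b v;
  actDr : forall a v w, act a (v + w) = act a v + act a w;
  actZl : forall (k : CC) a v, act (k *: a) v = k *: act a v;
  actZr : forall (k : CC) a v, act a (k *: v) = k *: act a v;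
  actA : forall a b v, act (amul a b) v = act a (act b v)
}.
Arguments act {A} _ _ _.

Definition quasicoherent (A : algebra) (M : lmod A) :=
  forall xi : M, exists a : A, act M a xi = xi.

Definition submodule (A : algebra) (M : lmod A) (S : M -> Prop) :=
  [/\ S 0, (forall x y, S x -> S y -> S (x + y)),
      (forall (k : CC) x, S x -> S (k *: x)) &
      (forall a x, S x -> S (act M a x))].

Definition fin_generated (A : algebra) (M : lmod A) :=
  exists s : seq M, forall S : M -> Prop, submodule S ->
    (forall x, x \in s -> S x) -> forall m, S m.

Definition coherent (A : algebra) (M : lmod A) :=
  quasicoherent M /\ fin_generated M.

Definition Alinear (A : algebra) (M N : lmod A) (f : M -> N) :=
  [/\ (forall x y, f (x + y) = f x + f y),
      (forall (k : CC) x, f (k *: x) = k *: f x) &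
      (forall a x, f (act M a x) = act N a (f x))].

(* A-linear maps defined on an A-submodule S of M (values outside S irrelevant) *)
Definition Alinear_on (A : algebra) (M N : lmod A) (S : M -> Prop) (f : M -> N) :=
  [/\ (forall x y, S x -> S y -> f (x + y) = f x + f y),
      (forall (k : CC) x, S x -> f (k *: x) = k *: f x) &
      (forall a x, S x -> f (act M a x) = act N a (f x))].

Definition projective_coh (A : algebra) (M : lmod A) :=
  forall (V W : lmod A) (pi : V -> W) (f : M -> W),
    coherent V -> coherent W -> Alinear pi -> (forall w, exists v, pi v = w) ->
    Alinear f -> exists g : M -> V, Alinear g /\ forall x, pi (g x) = f x.

(* ---------- B = End_{A,-}(M)^op ----------
   Elements of B are the A-linear maps T : M -> M; B acts on M on the right by
   xi . T = T xi, so the product in B is  S . T = T \o S  (opposite algebra). *)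
Definition inB (A : algebra) (M : lmod A) (T : M -> M) := Alinear (M:=M) (N:=M) T.

Definition addB (A : algebra) (M : lmod A) (S T : M -> M) : M -> M := fun x => S x + T x.
Definition scaleB (A : algebra) (M : lmod A) (k : CC) (T : M -> M) : M -> M := fun x => k *: T x.
Definition mulB (A : algebra) (M : lmod A) (S T : M -> M) : M -> M := fun x => T (S x).

Definition imgp (A : algebra) (M : lmod A) (p : M -> M) (xi : M) := exists eta, xi = p eta.

(* Statement (1): M is a quotient of (Mp)^{oplus n} for some n >= 1.  An A-linear
   map (Mp)^{oplus n} -> M is a family (f_k)_{k<n} of A-linear maps Mp -> M,
   acting as (x_k)_k |-> sum_k f_k x_k; we require it to be surjective. *)
Definition Mp_generates (A : algebra) (M : lmod A) (p : M -> M) :=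
  exists n : nat, (1 <= n)%N /\
    exists f : 'I_n -> M -> M, (forall k, Alinear_on (imgp p) (f k)) /\
      forall m : M, exists x : 'I_n -> M,
        (forall k, imgp p (x k)) /\ m = \sum_(k < n) f k (x k).

(* Left B-modules: a C-vector space N with an action of B satisfying the module axioms
   (the action is only constrained on elements of B, i.e. A-linear maps). *)
Definition Bmodule (A : algebra) (M : lmod A) (N : lmodType CC) (bact : (M -> M) -> N -> N) :=
  [/\ (forall S T v, inB S -> inB T -> bact (addB S T) v = bact S v + bact T v),
      (forall (k : CC) T v, inB T -> bact (scaleB k T) v = k *: bact T v),
      (forall T v w, inB T -> bact T (v + w) = bact T v + bact T w),
      (forall (k : CC) T v, inB T -> bact T (k *: v) = k *: bact T v) &
      (forall S T v, inB S -> inB T -> bact (mulB S T) v = bact S (bact T v))].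

Definition Bquasicoherent (A : algebra) (M : lmod A) (N : lmodType CC) (bact : (M -> M) -> N -> N) :=
  forall v : N, exists T, inB T /\ bact T v = v.

Definition Bsubmodule (A : algebra) (M : lmod A) (N : lmodType CC) (bact : (M -> M) -> N -> N)
    (S : N -> Prop) :=
  [/\ S 0, (forall x y, S x -> S y -> S (x + y)),
      (forall (k : CC) x, S x -> S (k *: x)) &
      (forall T x, inB T -> S x -> S (bact T x))].

Definition Birreducible (A : algebra) (M : lmod A) (N : lmodType CC) (bact : (M -> M) -> N -> N) :=
  (exists v : N, v <> 0) /\
  forall S : N -> Prop, Bsubmodule bact S -> (exists v, S v /\ v <> 0) -> forall v, S v.

Definition inBp (A : algebra) (M : lmod A) (p : M -> M) (X : M -> M) :=
  exists T, inB T /\ X = mulB T p.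

Definition quotient_of_Bp (A : algebra) (M : lmod A) (p : M -> M) (N : lmodType CC)
    (bact : (M -> M) -> N -> N) :=
  exists g : (M -> M) -> N,
    [/\ (forall X Y, inBp p X -> inBp p Y -> g (addB X Y) = g X + g Y),
        (forall (k : CC) X, inBp p X -> g (scaleB k X) = k *: g X),
        (forall T X, inB T -> inBp p X -> g (mulB T X) = bact T (g X)) &
        (forall v, exists X, inBp p X /\ g X = v)].

Definition generating_idempotent (A : algebra) (M : lmod A) (p : M -> M) :=
  forall (N : lmodType CC) (bact : (M -> M) -> N -> N),
    Bmodule bact -> Bquasicoherent bact -> Birreducible bact -> quotient_of_Bp p bact.

(* Main.v *)
Require Import Defs.
From HB Require Import structures.
From mathcomp Require Import all_boot all_algebra.
From mathcomp Require Import complex Rstruct.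
From mathcomp Require Import boolp classical_sets.
Set Implicit Arguments. Unset Strict Implicit. Unset Printing Implicit Defensive.
Import GRing.Theory.
Local Open Scope ring_scope.

Lemma addself0 (V : zmodType) (x : V) : x + x = x -> x = 0.
Proof. by move=> h; rewrite -[LHS](addrK x x) h subrr. Qed.

Lemma ffD (T : finType) (V : zmodType) (u w : {ffun T -> V}) k : (u + w) k = u k + w k.
Proof. by rewrite ffunE. Qed.
Lemma ffZ (T : finType) (V : lmodType CC) (c : CC) (u : {ffun T -> V}) k : (c *: u) k = c *: u k.
Proof. by rewrite ffunE. Qed.
Lemma ff0 (T : finType) (V : zmodType) k : (0 : {ffun T -> V}) k = 0.
Proof. by rewrite ffunE. Qed.

Section Basics.
Variables (A : algebra) (M : lmod A).

Lemma act0r a : act M a 0 = 0.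
Proof. by apply: addself0; rewrite -actDr addr0. Qed.
Lemma act0l v : act M 0 v = 0.
Proof. by apply: addself0; rewrite -actDl addr0. Qed.
Lemma actNl a v : act M (- a) v = - act M a v.
Proof. by apply/eqP; rewrite -addr_eq0 -actDl addNr act0l. Qed.
Lemma actNr a v : act M a (- v) = - act M a v.
Proof. by apply/eqP; rewrite -addr_eq0 -actDr addNr act0r. Qed.
Lemma actBl a b v : act M (a - b) v = act M a v - act M b v.
Proof. by rewrite actDl actNl. Qed.
Lemma actBr a v w : act M a (v - w) = act M a v - act M a w.
Proof. by rewrite actDr actNr. Qed.
Lemma act_sum a I (r : seq I) (P : pred I) (F : I -> M) :
  act M a (\sum_(i <- r | P i) F i) = \sum_(i <- r | P i) act M a (F i).
Proof. exact: (big_morph _ (actDr a) (act0r a)). Qed.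

Lemma lin0 (N : lmod A) (f : M -> N) : Alinear f -> f 0 = 0.
Proof. by case=> fD _ _; apply: addself0; rewrite -fD addr0. Qed.
Lemma linN (N : lmod A) (f : M -> N) x : Alinear f -> f (- x) = - f x.
Proof. by case=> _ fZ _; rewrite -scaleN1r fZ scaleN1r. Qed.
Lemma lin_sum (N : lmod A) (f : M -> N) I (r : seq I) (P : pred I) (F : I -> M) :
  Alinear f -> f (\sum_(i <- r | P i) F i) = \sum_(i <- r | P i) f (F i).
Proof. by move=> hf; apply: (big_morph _ _ (lin0 hf)); case: hf. Qed.

Lemma inB_id : @inB A M (fun x => x).
Proof. by split. Qed.
Lemma inB_zero : @inB A M (fun _ => 0).
Proof. by split=> *; rewrite ?addr0 ?scaler0 ?act0r. Qed.
Lemma inB_mul (S T : M -> M) : inB S -> inB T -> inB (mulB S T).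
Proof.
case=> SD SZ SA [TD TZ TA]; split=> *; rewrite /mulB.
- by rewrite SD TD.
- by rewrite SZ TZ.
- by rewrite SA TA.
Qed.
Lemma inB_add (S T : M -> M) : inB S -> inB T -> inB (addB S T).
Proof.
case=> SD SZ SA [TD TZ TA]; split=> *; rewrite /addB.
- by rewrite SD TD addrACA.
- by rewrite SZ TZ scalerDr.
- by rewrite SA TA actDr.
Qed.
Lemma inB_scale k (T : M -> M) : inB T -> inB (scaleB k T).
Proof.
case=> TD TZ TA; split=> *; rewrite /scaleB.
- by rewrite TD scalerDr.
- by rewrite TZ !scalerA mulrC.
- by rewrite TA actZr.
Qed.

Section BM.
Variables (N : lmodType CC) (bact : (M -> M) -> N -> N) (HB : Bmodule bact).

Lemma bact0 T : inB T -> bact T 0 = 0.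
Proof. by case: HB => _ _ h _ _ hT; apply: addself0; rewrite -h // addr0. Qed.
Lemma bactZero v : bact (fun _ => 0) v = 0.
Proof.
case: HB => h _ _ _ _; apply: addself0; rewrite -h; try exact: inB_zero.
by congr bact; apply: funext => x; rewrite /addB addr0.
Qed.
End BM.
End Basics.

Section Pow.
Variables (A : algebra) (M : lmod A).

Lemma qc_list : quasicoherent M -> forall s : seq M,
  exists a : A, forall x, x \in s -> act M a x = x.
Proof.
move=> hq; elim=> [|x s [e he]]; first by exists 0.
have [b hb] := hq (x - act M e x).
exists (e + b - amul b e) => z; rewrite inE => /orP [/eqP ->|zs].
  by rewrite actBl !actDl actA -addrA -actBr hb addrC subrK.
by rewrite actBl !actDl actA he // addrK.
Qed.

Definition powact n (a : A) (x : {ffun 'I_n -> M}) : {ffun 'I_n -> M} :=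
  [ffun k => act M a (x k)].

Definition powmod (n : nat) : lmod A.
refine (@LMod A {ffun 'I_n -> M} (@powact n) _ _ _ _ _).
- by move=> a b v; apply/ffunP => k; rewrite !ffunE actDl.
- by move=> a v w; apply/ffunP => k; rewrite !ffunE actDr.
- by move=> c a v; apply/ffunP => k; rewrite !ffunE actZl.
- by move=> c a v; apply/ffunP => k; rewrite !ffunE actZr.
- by move=> a b v; apply/ffunP => k; rewrite !ffunE actA.
Defined.

Definition delta n (k : 'I_n) (m : M) : {ffun 'I_n -> M} :=
  [ffun j => if j == k then m else 0].

Lemma powmod_coherent n : coherent M -> coherent (powmod n).
Proof.
case=> hq [s hs]; split.
  move=> x; have [a ha] := qc_list hq [seq x k | k <- enum 'I_n].
  exists a; apply/ffunP => k; rewrite /= /powact ffunE ha //.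
  by apply: map_f; rewrite mem_enum.
exists [seq delta k m | k <- enum 'I_n, m <- s] => S [S0 SD SZ SA] hS m.
have hk : forall k x, S (delta k x).
  move=> k; apply: hs.
  - split.
    + by have -> : delta k 0 = 0 by apply/ffunP=> j; rewrite !ffunE; case: ifP.
    + move=> x y hx hy.
      have -> : delta k (x + y) = delta k x + delta k y.
        by apply/ffunP=> j; rewrite !ffunE; case: ifP; rewrite ?addr0.
      exact: SD.
    + move=> c x hx.
      have -> : delta k (c *: x) = c *: delta k x.
        by apply/ffunP=> j; rewrite !ffunE; case: ifP; rewrite ?scaler0.
      exact: SZ.
    + move=> a x hx.
      have -> : delta k (act M a x) = act (powmod n) a (delta k x).
        by apply/ffunP=> j; rewrite /= /powact !ffunE; case: ifP; rewrite ?act0r.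
      exact: SA.
  - move=> x xs; apply: hS; apply/allpairsP; exists (k, x) => /=.
    by rewrite mem_enum.
have -> : m = \sum_(k < n) delta k (m k).
  apply/ffunP=> j; rewrite sum_ffunE (bigD1 j) //= ffunE eqxx big1 ?addr0 //.
  by move=> i /negbTE ij; rewrite ffunE eq_sym ij.
by apply: (big_ind S) => //; exact: SD.
Qed.
End Pow.

Section Dir12.
Variables (A : algebra) (M : lmod A) (p : M -> M).
Hypotheses (hp : inB p) (pp : forall xi, p (p xi) = p xi).

Lemma inBp_inB X : inBp p X -> inB X.
Proof. by case=> T [hT ->]; exact: inB_mul. Qed.

Lemma gen_from_nz (N : lmodType CC) (bact : (M -> M) -> N -> N) :
  Bmodule bact -> Birreducible bact -> forall w, bact p w <> 0 ->
  quotient_of_Bp p bact.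
Proof.
move=> HB hirr w hw.
have [hadd hsc _ _ hmul] := HB.
case: hp => pD pZ pA.
pose v0 := bact p w.
exists (fun X => bact X v0); split.
- by move=> X Y hX hY; apply: hadd; apply: inBp_inB.
- by move=> k X hX; apply: hsc; apply: inBp_inB.
- by move=> T X hT hX; apply: hmul => //; apply: inBp_inB.
move=> v; pose S := fun v => exists X, inBp p X /\ bact X v0 = v.
have hS : Bsubmodule bact S.
  split.
  - exists (fun _ => 0); split; last exact: bactZero.
    exists (fun _ => 0); split; first exact: inB_zero.
    by apply: funext => x; rewrite /mulB (lin0 hp).
  - move=> x y [X [hX <-]] [Y [hY <-]]; exists (addB X Y); split.
      case: hX => TX [hTX ->]; case: hY => TY [hTY ->].
      exists (addB TX TY); split; first exact: inB_add.
      by apply: funext => x0; rewrite /mulB /addB pD.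
    by apply: hadd; apply: inBp_inB.
  - move=> c x [X [hX <-]]; exists (scaleB c X); split.
      case: hX => TX [hTX ->].
      exists (scaleB c TX); split; first exact: inB_scale.
      by apply: funext => x0; rewrite /mulB /scaleB pZ.
    by apply: hsc; apply: inBp_inB.
  - move=> T x hT [X [hX <-]]; exists (mulB T X); split; last by rewrite hmul //; apply: inBp_inB.
    case: hX => TX [hTX ->].
    by exists (mulB T TX); split; first exact: inB_mul.
case: hirr => _ H; apply: (H S hS).
exists v0; split=> //.
exists p; split=> //.
  by exists (fun x => x); split; first exact: inB_id.
rewrite /v0 -hmul //.
by have -> : mulB p p = p by apply: funext => x; rewrite /mulB pp.
Qed.

Lemma gen_of_proj : coherent M -> projective_coh M -> Mp_generates p ->
  generating_idempotent p.
Proof.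
move=> hc hproj [n [n1 [f [hf hsurj]]]].
have [pD pZ pA] := hp.
pose pi := fun x : powmod M n => \sum_(k < n) f k (p ((x : {ffun 'I_n -> M}) k)).
have piL : Alinear pi.
  split.
  - move=> x y; rewrite /pi -big_split /=; apply: eq_bigr => k _.
    rewrite ffD pD; case: (hf k) => fD _ _; apply: fD; by eexists.
  - move=> c x; rewrite /pi scaler_sumr; apply: eq_bigr => k _.
    rewrite ffZ pZ; case: (hf k) => _ fZ _; apply: fZ; by eexists.
  - move=> a x; rewrite /pi act_sum; apply: eq_bigr => k _.
    rewrite /= /powact ffunE pA; case: (hf k) => _ _ fA; apply: fA; by eexists.
have pisurj : forall w, exists v, pi v = w.
  move=> w; have [x [hx ->]] := hsurj w; exists [ffun k => x k].
  rewrite /pi; apply: eq_bigr => k _; rewrite ffunE; have [e ->] := hx k.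
  by rewrite pp.
have [g [hg hgid]] := hproj (powmod M n) M pi (fun x => x)
  (powmod_coherent n hc) hc piL pisurj (@inB_id A M).
move=> N bact HB hq hirr.
pose G k := fun x => (g x : {ffun 'I_n -> M}) k.
have hG k : inB (G k).
  case: hg => gD gZ gA; split=> *; rewrite /G.
  - by rewrite gD ffD.
  - by rewrite gZ ffZ.
  - by rewrite gA /= /powact ffunE.
pose F k := fun y => f k (p y).
have hF k : inB (F k).
  split=> *; rewrite /F.
  - rewrite pD; case: (hf k) => fD _ _; apply: fD; by eexists.
  - rewrite pZ; case: (hf k) => _ fZ _; apply: fZ; by eexists.
  - rewrite pA; case: (hf k) => _ _ fA; apply: fA; by eexists.
pose T k := mulB (mulB (G k) p) (F k).
have hT k : inB (T k) := inB_mul (inB_mul (hG k) hp) (hF k).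
have idE : (fun x : M => x) = fun x => \sum_(k <- index_enum 'I_n) T k x.
  apply: funext => x; rewrite -{1}(hgid x) /pi /T /mulB /F /G.
  by apply: eq_bigr => k _; rewrite pp.
have [hadd hsc _ _ hmul] := HB.
case: (pselect (exists w, bact p w <> 0)) => [[w hw]|hn].
  exact: (gen_from_nz HB hirr hw).
have h0 w : bact p w = 0 by apply: contrapT => hw; apply: hn; exists w.
have key : forall r : seq 'I_n, inB (fun x => \sum_(k <- r) T k x) /\
    forall v, bact (fun x => \sum_(k <- r) T k x) v = 0.
  elim => [|k r [ih1 ih2]].
    have -> : (fun x : M => \sum_(k <- [::]) T k x) = fun _ => 0.
      by apply: funext => x; rewrite big_nil.
    by split; [exact: inB_zero | exact: bactZero].
  have -> : (fun x => \sum_(j <- k :: r) T j x) =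
            addB (T k) (fun x => \sum_(j <- r) T j x).
    by apply: funext => x; rewrite big_cons.
  split; first exact: inB_add.
  move=> v; rewrite hadd // ih2 addr0 /T hmul //; last exact: inB_mul.
  by rewrite hmul // h0 bact0.
have [_ hid] := key (index_enum 'I_n).
rewrite -idE in hid.
exfalso; case: hirr => [[v vnz] _]; apply: vnz; have [S [hS <-]] := hq v.
rewrite -[S]/(mulB S (fun x => x)) hmul ?hid ?bact0 //; exact: inB_id.
Qed.
End Dir12.

Definition leftideal (A : algebra) (M : lmod A) (L : (M -> M) -> Prop) :=
  [/\ (forall X, L X -> inB X), L (fun _ => 0),
      (forall X Y, L X -> L Y -> L (addB X Y)),
      (forall k X, L X -> L (scaleB k X)) &
      (forall T X, inB T -> L X -> L (mulB T X))].

Definition subF (A : algebra) (M : lmod A) (X Y : M -> M) : M -> M :=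
  addB X (scaleB (-1) Y).

Section Quot.
Variables (A : algebra) (M : lmod A) (L : (M -> M) -> Prop) (hL : leftideal L).

Definition coset (X : M -> M) := fun Y : M -> M => inB Y /\ L (subF Y X).
Definition Nt (_ : leftideal L) :=
  {C : (M -> M) -> Prop | exists X, inB X /\ C = coset X}.

Definition sel (X : M -> M) : M -> M := if pselect (inB X) then X else (fun _ => 0).
Lemma inB_sel X : inB (sel X).
Proof. rewrite /sel; destruct (pselect (inB X)) as [h|h]; [exact: h | exact: inB_zero]. Qed.
Lemma sel_id X : inB X -> sel X = X.
Proof. move=> hX; rewrite /sel; destruct (pselect (inB X)) as [h|h]; [by [] | by case: h]. Qed.

Definition cls (X : M -> M) : Nt hL :=
  exist _ (coset (sel X)) (ex_intro _ (sel X) (conj (inB_sel X) erefl)).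
Definition rep (C : Nt hL) : M -> M := sval (cid (proj2_sig C)).
Lemma rep_spec C : inB (rep C) /\ sval C = coset (rep C).
Proof. exact: (svalP (cid (proj2_sig C))). Qed.
Lemma rep_inB C : inB (rep C).
Proof. by case: (rep_spec C). Qed.

Lemma Neq (C D : Nt hL) : sval C = sval D -> C = D.
Proof. by case: C => c hc; case: D => d hd /= e; apply: eq_exist. Qed.

Lemma clsK C : cls (rep C) = C.
Proof. by apply: Neq => /=; rewrite sel_id ?rep_inB //; case: (rep_spec C). Qed.

Lemma Lsub0 X : L (subF X X).
Proof.
case: hL => _ h0 _ _ _.
by have -> : subF X X = (fun _ => 0) by apply: funext => x; rewrite /subF /addB /scaleB scaleN1r subrr.
Qed.
Lemma Lsym X Y : L (subF X Y) -> L (subF Y X).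
Proof.
case: hL => _ _ _ hZ _ /(hZ (-1)).
by have -> : scaleB (-1) (subF X Y) = subF Y X by
  apply: funext => x; rewrite /subF /addB /scaleB !scaleN1r opprD opprK addrC.
Qed.
Lemma Ltrans X Y Z : L (subF X Y) -> L (subF Y Z) -> L (subF X Z).
Proof.
case: hL => _ _ hD _ _ h1 h2; have := hD _ _ h1 h2.
by have -> : addB (subF X Y) (subF Y Z) = subF X Z by
  apply: funext => x; rewrite /subF /addB /scaleB !scaleN1r addrA subrK.
Qed.

Lemma cls_eqP X Y : inB X -> inB Y -> (cls X = cls Y <-> L (subF X Y)).
Proof.
move=> hX hY; split.
  move=> /(congr1 sval) /=; rewrite !sel_id // => e.
  have : coset X X by split => //; exact: Lsub0.
  by rewrite e => -[].
move=> h; apply: Neq => /=; rewrite !sel_id //.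
apply: funext => Z; apply: propext; split=> -[hZ hZ']; split => //.
  exact: Ltrans hZ' h.
exact: Ltrans hZ' (Lsym h).
Qed.

Lemma repK X : inB X -> L (subF (rep (cls X)) X).
Proof. by move=> hX; apply/cls_eqP => //; [exact: rep_inB | rewrite clsK]. Qed.

Lemma Nind (P : Nt hL -> Prop) : (forall X, inB X -> P (cls X)) -> forall C, P C.
Proof. by move=> h C; rewrite -(clsK C); apply: h; exact: rep_inB. Qed.

Definition zeroN : Nt hL := cls (fun _ => 0).
Definition addN (C D : Nt hL) : Nt hL := cls (addB (rep C) (rep D)).
Definition oppN (C : Nt hL) : Nt hL := cls (scaleB (-1) (rep C)).
Definition scaleN (k : CC) (C : Nt hL) : Nt hL := cls (scaleB k (rep C)).
Definition bactN (T : M -> M) (C : Nt hL) : Nt hL := cls (mulB T (rep C)).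

Lemma addN_cls X Y : inB X -> inB Y -> addN (cls X) (cls Y) = cls (addB X Y).
Proof.
move=> hX hY; apply/cls_eqP; try apply: inB_add => //; try exact: rep_inB.
case: hL => _ _ hD _ _; have := hD _ _ (repK hX) (repK hY).
by have -> : addB (subF (rep (cls X)) X) (subF (rep (cls Y)) Y) =
  subF (addB (rep (cls X)) (rep (cls Y))) (addB X Y) by
  apply: funext => x; rewrite /subF /addB /scaleB !scaleN1r opprD !addrA;
  congr (_ + _); rewrite -!addrA; congr (_ + _); rewrite addrC.
Qed.

Lemma scaleN_cls k X : inB X -> scaleN k (cls X) = cls (scaleB k X).
Proof.
move=> hX; apply/cls_eqP; try apply: inB_scale => //; try exact: rep_inB.
case: hL => _ _ _ hZ _; have := hZ k _ (repK hX).
by have -> : scaleB k (subF (rep (cls X)) X) = subF (scaleB k (rep (cls X))) (scaleB k X) by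
  apply: funext => x; rewrite /subF /addB /scaleB !scaleN1r scalerDr scalerN.
Qed.

Lemma oppN_cls X : inB X -> oppN (cls X) = cls (scaleB (-1) X).
Proof. exact: scaleN_cls. Qed.

Lemma bactN_cls T X : inB T -> inB X -> bactN T (cls X) = cls (mulB T X).
Proof.
move=> hT hX; apply/cls_eqP; try apply: inB_mul => //; try exact: rep_inB.
case: hL => _ _ _ _ hM; have := hM T _ hT (repK hX).
by [].
Qed.

Ltac sideB := repeat first [assumption | apply: inB_zero | apply: inB_id | apply: inB_add | apply: inB_scale | apply: inB_mul | apply: rep_inB].

Lemma addNA : associative addN.
Proof.
move=> a b c; elim/Nind: a => X hX; elim/Nind: b => Y hY; elim/Nind: c => Z hZ.
rewrite !addN_cls ; sideB; congr cls; apply: funext => x; by rewrite /addB addrA.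
Qed.
Lemma addNC : commutative addN.
Proof.
move=> a b; elim/Nind: a => X hX; elim/Nind: b => Y hY.
rewrite !addN_cls //; congr cls; apply: funext => x; by rewrite /addB addrC.
Qed.
Lemma add0N : left_id zeroN addN.
Proof.
move=> a; elim/Nind: a => X hX; rewrite /zeroN addN_cls ; sideB.
congr cls; apply: funext => x; by rewrite /addB add0r.
Qed.
Lemma addNN : left_inverse zeroN oppN addN.
Proof.
move=> a; elim/Nind: a => X hX; rewrite oppN_cls // addN_cls ; sideB.
congr cls; apply: funext => x; by rewrite /addB /scaleB scaleN1r addNr.
Qed.
Lemma scaleNA a b v : scaleN a (scaleN b v) = scaleN (a * b) v.
Proof.
elim/Nind: v => X hX; rewrite !scaleN_cls ; sideB.
congr cls; apply: funext => x; by rewrite /scaleB scalerA.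
Qed.
Lemma scale1N : left_id 1 scaleN.
Proof.
move=> v; elim/Nind: v => X hX; rewrite !scaleN_cls //.
congr cls; apply: funext => x; by rewrite /scaleB scale1r.
Qed.
Lemma scaleNDr : right_distributive scaleN addN.
Proof.
move=> k a b; elim/Nind: a => X hX; elim/Nind: b => Y hY.
rewrite (addN_cls hX hY) (scaleN_cls k hX) (scaleN_cls k hY) scaleN_cls; sideB; rewrite addN_cls; sideB.
congr cls; apply: funext => x; by rewrite /addB /scaleB scalerDr.
Qed.
Lemma scaleNDl v : {morph scaleN^~ v : a b / a + b >-> addN a b}.
Proof.
move=> a b; elim/Nind: v => X hX.
rewrite !scaleN_cls // addN_cls ; sideB.
congr cls; apply: funext => x; by rewrite /addB /scaleB scalerDl.
Qed.

End Quot.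

HB.instance Definition _ (A : algebra) (M : lmod A) (L : (M -> M) -> Prop) (hL : leftideal L) :=
  gen_eqMixin (Nt hL).
HB.instance Definition _ (A : algebra) (M : lmod A) (L : (M -> M) -> Prop) (hL : leftideal L) :=
  gen_choiceMixin (Nt hL).
HB.instance Definition _ (A : algebra) (M : lmod A) (L : (M -> M) -> Prop) (hL : leftideal L) :=
  GRing.isZmodule.Build (Nt hL) (@addNA _ _ _ hL) (@addNC _ _ _ hL) (@add0N _ _ _ hL) (@addNN _ _ _ hL).
HB.instance Definition _ (A : algebra) (M : lmod A) (L : (M -> M) -> Prop) (hL : leftideal L) :=
  GRing.Zmodule_isLmodule.Build CC (Nt hL) (@scaleNA _ _ _ hL) (@scale1N _ _ _ hL) (@scaleNDr _ _ _ hL) (@scaleNDl _ _ _ hL).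


Section Zorn.
Variables (A : algebra) (M : lmod A).

Lemma max_ideal (J : (M -> M) -> Prop) : leftideal J -> ~ J (fun x => x) ->
  exists L, [/\ leftideal L, (forall X, J X -> L X), ~ L (fun x => x) &
    (forall L', leftideal L' -> (forall X, L X -> L' X) -> ~ L' (fun x => x) ->
       forall X, L' X -> L X)].
Proof.
move=> hJ hnJ.
have [JinB J0 JD JZ JM] := hJ.
pose T := {L : (M -> M) -> Prop | leftideal L /\ (forall X, J X -> L X) /\ ~ L (fun x => x)}.
pose R : rel T := fun a b => `[< forall X, sval a X -> sval b X >].
pose t0 : T := exist _ J (conj hJ (conj (fun X h => h) hnJ)).
have ZL : exists t, premaximal R t.
  apply: (@ZL_preorder T t0 R).
- by move=> a; apply/asboolP.
- by move=> a b c /asboolP h1 /asboolP h2; apply/asboolP => X /h1/h2.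
- move=> C Ctot.
  pose U X := J X \/ exists a, C a /\ sval a X.
  have hU : leftideal U /\ (forall X, J X -> U X) /\ ~ U (fun x => x).
    split; last split.
    - split.
      + move=> X [hX|[a [Ca aX]]]; first exact: JinB.
        by have [[ainB _ _ _ _] _] := svalP a; apply: ainB.
      + by left.
      + move=> X Y [hX|[a [Ca aX]]] [hY|[b [Cb bY]]].
        * by left; apply: JD.
        * have [[_ _ bD _ _] [bJ _]] := svalP b.
          by right; exists b; split => //; apply: bD => //; apply: bJ.
        * have [[_ _ aD _ _] [aJ _]] := svalP a.
          by right; exists a; split => //; apply: aD => //; apply: aJ.
        * have [/asboolP ab | /asboolP ba] := Ctot a b Ca Cb.
            have [[_ _ bD _ _] [bJ _]] := svalP b.
            by right; exists b; split => //; apply: bD => //; apply: ab.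
          have [[_ _ aD _ _] [aJ _]] := svalP a.
          by right; exists a; split => //; apply: aD => //; apply: ba.
      + move=> k X [hX|[a [Ca aX]]]; first by left; apply: JZ.
        have [[_ _ _ aZ _] _] := svalP a.
        by right; exists a; split => //; apply: aZ.
      + move=> S X hS [hX|[a [Ca aX]]]; first by left; apply: JM.
        have [[_ _ _ _ aM] _] := svalP a.
        by right; exists a; split => //; apply: aM.
    - by move=> X hX; left.
    - case=> [//|[a [Ca aid]]].
      by have [_ [_ hn]] := svalP a.
  exists (exist _ U hU) => s Cs; apply/asboolP => X h /=.
  by right; exists s.
have [t ht] := ZL.
have [hL [hJL hnL]] := svalP t.
exists (sval t); split => // L' hL' sub hn.
have hT : leftideal L' /\ (forall X, J X -> L' X) /\ ~ L' (fun x => x).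
  by split => //; split => // X /hJL /sub.
have /asboolP := ht (exist _ L' hT) (introT (asboolP _) sub).
by [].
Qed.
End Zorn.

Section Dir21.
Variables (A : algebra) (M : lmod A) (p : M -> M).
Hypotheses (hp : inB p) (pp : forall xi, p (p xi) = p xi).

Inductive Jset : (M -> M) -> Prop :=
 | J0 : Jset (fun _ => 0)
 | Jc (b c X : M -> M) : inB b -> inB c -> Jset X -> Jset (fun x => c (p (b x)) + X x).

Lemma J_inB X : Jset X -> inB X.
Proof.
elim=> [|b c Y hb hc _ ih]; first exact: inB_zero.
exact: (inB_add (inB_mul (inB_mul hb hp) hc) ih).
Qed.

Lemma J_add X Y : Jset X -> Jset Y -> Jset (addB X Y).
Proof.
move=> hX hY; elim: hX => [|b c Z hb hc _ ih].
  by have -> : addB (fun _ : M => 0) Y = Y by apply: funext => x; rewrite /addB add0r.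
have -> : addB (fun x => c (p (b x)) + Z x) Y = fun x => c (p (b x)) + addB Z Y x.
  by apply: funext => x; rewrite /addB addrA.
exact: Jc.
Qed.

Lemma J_scale k X : Jset X -> Jset (scaleB k X).
Proof.
elim=> [|b c Z hb hc _ ih].
  have -> : scaleB k (fun _ : M => 0) = (fun _ => 0) by apply: funext => x; rewrite /scaleB scaler0.
  exact: J0.
have -> : scaleB k (fun x => c (p (b x)) + Z x) = fun x => scaleB k c (p (b x)) + scaleB k Z x.
  by apply: funext => x; rewrite /scaleB scalerDr.
by apply: Jc => //; apply: inB_scale.
Qed.

Lemma J_mul T X : inB T -> Jset X -> Jset (mulB T X).
Proof.
move=> hT; elim=> [|b c Z hb hc _ ih]; first exact: J0.
exact: (@Jc (mulB T b) c (mulB T Z) (inB_mul hT hb) hc ih).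
Qed.

Lemma J_ideal : leftideal Jset.
Proof.
split; [exact: J_inB | exact: J0 | exact: J_add | exact: J_scale | exact: J_mul].
Qed.

Lemma J_single b c : inB b -> inB c -> Jset (fun x => c (p (b x))).
Proof.
move=> hb hc; have := Jc hb hc J0.
by have -> : (fun x => c (p (b x)) + 0) = (fun x => c (p (b x))) by apply: funext => x; rewrite addr0.
Qed.

Lemma J_decomp X : Jset X -> exists n (b c : 'I_n.+1 -> M -> M),
  (forall k, inB (b k) /\ inB (c k)) /\ forall x, X x = \sum_(k < n.+1) c k (p (b k x)).
Proof.
elim=> [|b0 c0 Z hb0 hc0 _ [n [b [c [hbc hZ]]]]].
  exists 0%N, (fun _ _ => 0), (fun _ _ => 0); split.
    by move=> k; split; exact: inB_zero.
  by move=> x; rewrite big_ord1.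
exists n.+1, (fun k => if unlift ord0 k is Some k' then b k' else b0),
  (fun k => if unlift ord0 k is Some k' then c k' else c0); split.
  by move=> k; case: (unlift ord0 k) => [k'|] //; apply: hbc.
move=> x; rewrite big_ord_recl unlift_none hZ; congr (_ + _).
by apply: eq_bigr => i _; rewrite liftK.
Qed.

Lemma Mp_of_J : Jset (fun x => x) -> Mp_generates p.
Proof.
move=> /J_decomp [n [b [c [hbc hX]]]].
exists n.+1; split => //.
exists c; split.
  move=> k; have [_ [cD cZ cA]] := hbc k; split=> *; [exact: cD | exact: cZ | exact: cA].
move=> m; exists (fun k => p (b k m)); split; first by move=> k; exists (b k m).
exact: hX.
Qed.

Lemma gen_to_Mp : generating_idempotent p -> Mp_generates p.
Proof.
move=> hgen.
case: (pselect (Jset (fun x => x))) => [hJ|hnJ]; first exact: Mp_of_J.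
exfalso.
have [L [hL hJL hnL hmax]] := max_ideal J_ideal hnJ.
have [LinB L0 LD LZ LM] := hL.
pose N := Nt hL.
have addE (x y : N) : x + y = addN x y by [].
have zeroE : (0 : N) = zeroN hL by [].
have subF0 (X : M -> M) : subF X (fun _ => 0) = X.
  by apply: funext => x; rewrite /subF /addB /scaleB scaler0 addr0.
have clsL X : L X -> cls hL X = 0.
  move=> hX; rewrite zeroE; apply/cls_eqP; [exact: LinB | exact: inB_zero | by rewrite subF0].
have Lcls X : inB X -> cls hL X = 0 -> L X.
  move=> hX; rewrite zeroE => /cls_eqP; rewrite subF0; apply => //; exact: inB_zero.
have HB : Bmodule ((@bactN _ _ _ hL)).
  split.
  - move=> S T v hS hT; elim/Nind: v => X hX.
    rewrite addE !bactN_cls //; last exact: inB_add.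
    rewrite addN_cls; try (apply: inB_mul => //).
    congr cls; apply: funext => x; rewrite /mulB /addB.
    by case: hX => XD _ _; rewrite XD.
  - move=> k T v hT; elim/Nind: v => X hX.
    rewrite !bactN_cls //; last exact: inB_scale.
    rewrite -[k *: _]/(scaleN k _) scaleN_cls; last exact: inB_mul.
    congr cls; apply: funext => x; rewrite /mulB /scaleB.
    by case: hX => _ XZ _; rewrite XZ.
  - move=> T v w hT; elim/Nind: v => X hX; elim/Nind: w => Y hY.
    rewrite !addE (addN_cls hL hX hY) (bactN_cls hL hT hX) (bactN_cls hL hT hY).
    rewrite (bactN_cls hL hT (inB_add hX hY)) addN_cls //; apply: inB_mul => //.
  - move=> k T v hT; elim/Nind: v => X hX.
    rewrite -[k *: _]/(scaleN k _) scaleN_cls // !bactN_cls //; last exact: inB_scale.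
    by rewrite -[k *: _]/(scaleN k _) scaleN_cls //; apply: inB_mul => //.
  - move=> S T v hS hT; elim/Nind: v => X hX.
    by rewrite !bactN_cls //; apply: inB_mul.
have hq : Bquasicoherent ((@bactN _ _ _ hL)).
  move=> v; exists (fun x => x); split; first exact: inB_id.
  by rewrite /bactN clsK.
have clsid0 : cls hL (fun x => x) <> 0.
  by move=> /(Lcls _ (@inB_id A M)).
have hirr : Birreducible ((@bactN _ _ _ hL)).
  split; first by exists (cls hL (fun x => x)).
  move=> S [S0 SD SZ SA] [v0 [Sv0 v0nz]].
  pose L' := fun Y => inB Y /\ S (cls hL Y).
  have hL' : leftideal L'.
    split.
    - by move=> X [].
    - by split; [exact: inB_zero | exact: S0].
    - move=> X Y [hX sX] [hY sY]; split; first exact: inB_add.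
      by rewrite -addN_cls //; apply: SD.
    - move=> k X [hX sX]; split; first exact: inB_scale.
      by rewrite -scaleN_cls //; apply: SZ.
    - move=> T X hT [hX sX]; split; first exact: inB_mul.
      by rewrite -bactN_cls //; apply: SA.
  have sub : forall X, L X -> L' X.
    by move=> X hX; split; [exact: LinB | rewrite clsL].
  have hid : L' (fun x => x).
    apply: contrapT => hn.
    have := hmax L' hL' sub hn (rep v0).
    have hr := rep_inB v0.
    rewrite /L' clsK => /(_ (conj hr Sv0)) /(clsL _).
    by rewrite clsK.
  move=> w; rewrite -(clsK w).
  have -> : cls hL (rep w) = (@bactN _ _ _ hL) (rep w) (cls hL (fun x => x)).
    by rewrite (bactN_cls hL (rep_inB w) (@inB_id A M)).
  by apply: SA; [exact: rep_inB | case: hid].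
have [g [gadd gsc gmul gsurj]] := hgen N ((@bactN _ _ _ hL)) HB hq hirr.
have hpp : inBp p p by exists (fun x => x); split; first exact: inB_id.
have gp : g p = 0.
  have e : mulB p p = p by apply: funext => x; rewrite /mulB pp.
  have := gmul p p hp hpp; rewrite e => ->.
  rewrite -(clsK (g p)) bactN_cls //; last exact: rep_inB.
  apply: clsL; apply: hJL; exact: (J_single (@inB_id A M) (rep_inB (g p))).
have [X [[T [hT ->]] gX]] := gsurj (cls hL (fun x => x)).
apply: clsid0; rewrite -gX gmul // gp zeroE /zeroN bactN_cls //; last exact: inB_zero.
Qed.
End Dir21.

Theorem theorem7p11 (A : algebra) (M : lmod A) (p : M -> M) :
  AUF A -> coherent M -> inB p -> (forall xi, p (p xi) = p xi) ->
  (generating_idempotent p -> Mp_generates p) /\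
  (projective_coh M -> (Mp_generates p <-> generating_idempotent p)).
Proof.
move=> _ hc hp pp; split; first exact: gen_to_Mp.
move=> hproj; split; [exact: gen_of_proj | exact: gen_to_Mp].
Qed.
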